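(* Fix $k\ge2$, $c>0$ and $\zeta_n\in(0,1]$ with $\limsup_n\zeta_n(k-1)c^{k-1}<e$. Let $G=G_n$ be a sequence of asymptotically tree-like, approximately regular $k$-uniform hypergraphs with maximum degree $\Delta$, and let $\mathbf x^\ast$ be the unique fixed point of $F^{G}_{c,\zeta_n}$. Then, uniformly in $v\in V(G)$, $$x_v^\ast=\left(\frac{W((k-1)c^{k-1}\zeta_n)}{(k-1)\zeta_n}\right)^{\frac1{k-1}}+o(1).$$
   Context: Hypergraphs are simple. For a hypergraph $G$ and $S\subseteq V(G)$, $d_G(S)=|\{e\in E(G):S\subseteq e\}|$, $\Delta_\ell(G)=\max_{|S|=\ell}d_G(S)$, $\Delta(G)=\Delta_1(G)$ the maximum degree, $\delta(G)$ the minimum degree, and $\Gamma(G)$ is the maximum over distinct $v,v'$ of the number of $(k-1)$-sets $S$ with $S\cup\{v\},S\cup\{v'\}\in E(G)$. A sequence $(G_n)$ of $k$-uniform hypergraphs is asymptotically tree-like if, with $G=G_n$, $\Delta=\Delta(G)$, as $n\to\infty$: (1) $\Delta\to\infty$; (2) $\Delta_\ell(G)=o(\Delta^{\frac{k-\ell}{k-1}})$ for each $\ell\in\{2,\dots,k-1\}$; (3) $\Gamma(G)=o(\Delta)$; (4) $|E(G)|/|V(G)|=\Omega(\Delta)$. It is approximately regular if also $\delta(G)=(1-o(1))\Delta(G)$. $(F^G_{c,\zeta}(\mathbf x))_v=c\exp\left(-\frac{\zeta}{\Delta}\sum_{e\ni v}\prod_{u\in e\setminus\{v\}}x_u\right)$.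 $W$ is the Lambert $W$ function. *)

(* Defs.v *)
From HB Require Import structures.
From mathcomp Require Import all_boot all_order all_algebra.
From mathcomp Require Import all_classical all_reals all_analysis.
Set Implicit Arguments. Unset Strict Implicit. Unset Printing Implicit Defensive.
Import Order.TTheory GRing.Theory Num.Theory.
Import numFieldNormedType.Exports.
Local Open Scope classical_set_scope.
Local Open Scope ring_scope.

Definition uniform (V : finType) (k : nat) (E : {set {set V}}) : Prop :=
  forall e, e \in E -> #|e| = k.

Definition hdeg (V : finType) (E : {set {set V}}) (S : {set V}) : nat :=
  #|[set e in E | S \subset e]|.

Definition hDelta_l (V : finType) (E : {set {set V}}) (l : nat) : nat :=
  \max_(S : {set V} | #|S| == l) hdeg E S.

Definition hDelta (V : finType) (E : {set {set V}}) : nat := hDelta_l E 1.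

(* delta(G) = minimum degree (the seed Delta(G) is irrelevant when V is nonempty) *)
Definition hdelta (V : finType) (E : {set {set V}}) : nat :=
  \big[minn/hDelta E]_(v : V) hdeg E [set v].

Definition hGamma (V : finType) (k : nat) (E : {set {set V}}) : nat :=
  \max_(p : V * V | p.1 != p.2)
     #|[set S : {set V} | (#|S| == k.-1) && (p.1 |: S \in E) && (p.2 |: S \in E)]|.

Definition asymp_tree_like (R : realType) (k : nat) (V : nat -> finType)
    (E : forall n, {set {set V n}}) : Prop :=
  [/\
      ((hDelta (E n))%:R : R) @[n --> \oo] --> +oo,
      (forall l : nat, (2 <= l)%N -> (l <= k.-1)%N ->
         ((hDelta_l (E n) l)%:R /
            (((hDelta (E n))%:R : R) `^ ((k - l)%:R / (k.-1)%:R)))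
           @[n --> \oo] --> (0 : R)),
      ((hGamma k (E n))%:R / ((hDelta (E n))%:R : R)) @[n --> \oo] --> 0
    &
      exists2 C : R, 0 < C &
        \forall n \near \oo,
          C * (hDelta (E n))%:R <= (#|E n|)%:R / (#|V n|)%:R ].

Definition approx_regular (R : realType) (V : nat -> finType)
    (E : forall n, {set {set V n}}) : Prop :=
  ((hdelta (E n))%:R / ((hDelta (E n))%:R : R)) @[n --> \oo] --> (1 : R).

Definition Fmap (R : realType) (V : finType) (E : {set {set V}}) (c zeta : R)
    (x : V -> R) (v : V) : R :=
  c * expR (- (zeta / (hDelta E)%:R) *
              \sum_(e in E | v \in e) \prod_(u in e :\ v) x u).

Definition lambertW (R : realType) (x : R) : R :=
  xget 0 [set w : R | -1 <= w /\ w * expR w = x].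

(* Main.v *)
Require Import Defs.
From HB Require Import structures.
From mathcomp Require Import all_boot all_order all_algebra.
From mathcomp Require Import all_classical all_reals all_analysis.
Import Order.TTheory GRing.Theory Num.Theory.
Import numFieldNormedType.Exports.
Local Open Scope classical_set_scope.
Local Open Scope ring_scope.

From mathcomp Require Import ring lra.
Set Implicit Arguments. Unset Strict Implicit. Unset Printing Implicit Defensive.
Lemma limsup_lt (R : realType) (u : nat -> R) (l : R) (B : R) :
  (forall n, 0 <= u n <= B) -> limn_sup u < l -> \forall n \near \oo, u n < l.
Proof.
move=> hb; have bu : bounded_fun (u : R^o^nat).
  exists B; split; first by rewrite num_real.
  move=> M hM x _ /=; case/andP: (hb x) => h0 h1.
  by rewrite ger0_norm // ltW // (le_lt_trans h1 hM).
rewrite limn_supE // => /inf_lt[].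
  by exists (sups u 0); exists 0%N.
move=> _ [N _ <-] hN; exists N => // n /= hn.
apply: le_lt_trans hN; rewrite /sups /=.
apply: ub_le_sup; last by exists n.
exact/has_ubound_sdrop/bounded_fun_has_ubound.
Qed.
Lemma lambertW_spec (R : realType) (a : R) : 0 < a ->
  0 < lambertW a /\ lambertW a * expR (lambertW a) = a.
Proof.
move=> a0.
have ex : exists w : R, -1 <= w /\ w * expR w = a.
  have := @IVT R (fun t => t * expR t) 0 a a (ltW a0).
  case.
  - move=> t; apply: continuous_subspaceT => z.
    apply: continuousM; first exact: cvg_id.
    exact: continuous_expR.
  - rewrite mul0r; apply/andP; split.
      by rewrite ge_min ltW.
    rewrite le_max; apply/orP; right.
    by rewrite -[X in X <= _]mulr1 ler_pM2l // -expR0 ler_expR ltW.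
  move=> w; rewrite in_itv /= => /andP[w0 _] hw; exists w; split => //.
  by apply: le_trans w0; rewrite lerN10.
have [h1 h2] := xgetPex 0 ex.
rewrite /lambertW; split => //.
rewrite ltNge; apply/negP => hle.
have : xget 0 [set w : R | -1 <= w /\ w * expR w = a] * expR (xget 0 [set w : R | -1 <= w /\ w * expR w = a]) <= 0.
  by rewrite mulr_le0_ge0 // expR_ge0.
by rewrite h2 leNgt a0.
Qed.
Lemma is_derive_comp1 (R : realType) (f g : R -> R) (x df dg : R) :
  is_derive x 1 f df -> is_derive (f x) 1 g dg -> is_derive x 1 (g \o f) (dg * df).
Proof.
move=> [hf ef] [hg eg]; apply: DeriveDef.
  by apply/derivable1_diffP/differentiable_comp; exact/derivable1_diffP.
by rewrite -derive1E derive1_comp // !derive1E ef eg.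
Qed.

Lemma is_derive_expN (R : realType) (b t : R) :
  is_derive t 1 (fun s : R => b * expR (- s)) (- (b * expR (- t))).
Proof.
have h := is_derive_comp1 (is_deriveNid t 1) (is_derive_expR (- t)).
have h2 := @is_deriveZ R R^o R^o (expR \o -%R) b t 1 _ h.
have -> : (fun s : R => b * expR (- s)) = b \*: (expR \o -%R) :> (R^o -> R^o) by [].
apply: is_derive_eq h2 _.
by rewrite /= mulrN1; exact: mulrN.
Qed.

Lemma sexp_le (R : realType) (s : R) : s * expR (- s) <= expR (-1).
Proof.
have h := expR_ge1Dx (s - 1).
rewrite addrC subrK expRD in h.
have hp := expR_gt0 (- s).
have -> : expR (-1) = expR s * expR (-1) * expR (- s).
  by rewrite mulrAC -expRD subrr expR0 mul1r.
by rewrite ler_pM2r.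
Qed.

Lemma hlip (R : realType) (a w q : R) : 0 < a -> w <= q ->
  a * expR (- (a * expR (- q))) - a * expR (- (a * expR (- w)))
    <= a * expR (-1) * (q - w).
Proof.
move=> a0 wq.
pose F := fun t : R => a * expR (- (a * expR (- t))) - a * expR (-1) * t.
pose DF := fun t : R => (- (a * expR (- (a * expR (- t))))) * (- (a * expR (- t)))
                         - a * expR (-1).
have dF : forall t : R, is_derive (t : R^o) (1 : R^o) (F : R^o -> R^o) (DF t).
  move=> t.
  have h1 := is_derive_comp1 (is_derive_expN a t) (is_derive_expN a (a * expR (- t))).
  have h2 := @is_deriveZ R R^o R^o id (a * expR (-1)) t 1 _ (@is_derive_id R R^o t 1).
  have h3 := @is_deriveB R R^o R^o _ _ t 1 _ _ h1 h2.
  apply: (is_derive_eq h3); rewrite /DF; congr (_ - _); exact: mulr1.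
have cF : {within `[w, q], continuous F}.
  apply: continuous_subspaceT => x.
  have [dx _] := dF x.
  exact/differentiable_continuous/derivable1_diffP.
have [c _ hc] := MVT_segment wq (fun x _ => dF x) cF.
have : F q - F w <= 0.
  rewrite hc; apply: mulr_le0_ge0; last by rewrite subr_ge0.
  rewrite /DF mulrNN subr_le0 -mulrA ler_pM2l //.
  by rewrite mulrC sexp_le.
rewrite /F => h.
rewrite -subr_le0; apply: le_trans h; rewrite le_eqVlt; apply/orP; left; apply/eqP.
ring.
Qed.

Lemma expdiff (R : realType) (r s : R) : 0 <= r <= 1 -> 0 <= s ->
  expR (- (r * s)) - expR (- s) <= (1 - r) * s.
Proof.
move=> /andP[r0 r1] s0.
have h := expR_ge1Dx (- ((1 - r) * s)).
have e : expR (- s) = expR (- (r * s)) * expR (- ((1 - r) * s)).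
  by rewrite -expRD; congr expR; ring.
have hx : expR (- (r * s)) <= 1.
  by rewrite -expR0 ler_expR oppr_le0 mulr_ge0.
have hp := expR_gt0 (- (r * s)).
have hq : 0 <= (1 - r) * s by rewrite mulr_ge0 // subr_ge0.
rewrite e.
have : expR (- (r * s)) * (1 - expR (- ((1 - r) * s))) <= 1 * ((1 - r) * s).
  apply: ler_pM; [exact: ltW hp| |exact: hx|].
    by rewrite subr_ge0 -[leRHS]expR0 ler_expR oppr_le0.
  lra.
by rewrite mul1r mulrBr mulr1.
Qed.

Lemma core (R : realType) (a A r p q w : R) :
  0 < a -> a <= A -> A < expR 1 -> 0 <= r <= 1 -> 0 < w -> w * expR w = a ->
  0 <= q -> q <= a * expR (- (r * p)) -> a * expR (- q) <= p ->
  q <= w + (1 - r) * a ^+ 2 / (1 - A * expR (-1)) /\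
  w - w * ((1 - r) * a ^+ 2 / (1 - A * expR (-1))) <= p.
Proof.
move=> a0 aA Ae /andP[r0 r1] w0 hw q0 hq hp.
set L := A * expR (-1).
have eL : expR 1 * expR (-1) = 1 :> R.
  by rewrite expRN mulfV // gt_eqF // expR_gt0.
have L1 : L < 1.
  rewrite /L -[X in _ < X]eL ltr_pM2r //; exact: expR_gt0.
have L0 : 0 < 1 - L by rewrite subr_gt0.
have aL : a * expR (-1) <= L by rewrite /L ler_pM2r // expR_gt0.
set D := (1 - r) * a ^+ 2 / (1 - L).
have D0 : 0 <= D by rewrite /D divr_ge0 ?mulr_ge0 ?subr_ge0 ?sqr_ge0 // ltW.
have aw : a * expR (- w) = w by rewrite -hw -mulrA -expRD subrr expR0 mulr1.
set s := a * expR (- q).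
have s0 : 0 <= s by rewrite mulr_ge0 // ?expR_ge0 ltW.
have sa : s <= a.
  by rewrite /s -[leRHS]mulr1 ler_pM2l // -[leRHS]expR0 ler_expR oppr_le0.
have hq2 : q <= a * expR (- (r * s)).
  apply: le_trans hq _; rewrite ler_pM2l // ler_expR lerN2.
  by rewrite ler_wpM2l.
have hrs : a * expR (- (r * s)) - a * expR (- s) <= (1 - r) * a ^+ 2.
  have ->: (1 - r) * a ^+ 2 = a * ((1 - r) * a) by ring.
  rewrite -mulrBr ler_pM2l //.
  apply: le_trans (expdiff (s:=s) _ s0) _; first by rewrite r0 r1.
  by rewrite ler_wpM2l // subr_ge0.
have hqD : q <= w + D.
  case: (leP q w) => hqw.
    by apply: le_trans hqw _; rewrite lerDl.
  have hl := hlip a0 (ltW hqw).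
  rewrite aw -/s in hl.
  have : (1 - L) * (q - w) <= (1 - r) * a ^+ 2.
    have hqw0 : 0 <= q - w by rewrite subr_ge0 ltW.
    have : a * expR (-1) * (q - w) <= L * (q - w) by rewrite ler_wpM2r.
    move=> hh.
    have : q - w <= (1 - r) * a ^+ 2 + L * (q - w).
      move: hq2 hrs hl hh; set X := a * expR (- (r * s)); set Y := a * expR (- s).
      set Z := a * expR (-1) * (q - w). move=> *. lra.
    move=> hh2; rewrite mulrBl mul1r; lra.
  move=> hh; rewrite -lerBlDl /D ler_pdivlMr // mulrC //.
split => //.
have : a * expR (- (w + D)) <= p.
  apply: le_trans hp; rewrite ler_pM2l // ler_expR lerN2 //.
rewrite opprD expRD mulrA aw => hh; apply: le_trans hh.
have := expR_ge1Dx (- D).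
move=> hD; have := ler_wpM2l (ltW w0) hD.
by rewrite mulrDr mulr1 mulrN.
Qed.
Lemma root_bound (R : realType) (X Y : R) (n : nat) : 0 < X -> 0 <= Y ->
  `|X - Y| * X ^+ n <= `|X ^+ n.+1 - Y ^+ n.+1|.
Proof.
move=> X0 Y0; rewrite subrXX normrM ler_wpM2l //.
rewrite big_ord_recl /= subn0 expr0 mulr1.
have h : 0 <= \sum_(i < n) X ^+ (n - bump 0 i) * Y ^+ bump 0 i.
  by apply: sumr_ge0 => i _; rewrite mulr_ge0 // exprn_ge0 // ltW.
rewrite ger0_norm; first by rewrite lerDl.
by rewrite addr_ge0 // exprn_ge0 // ltW.
Qed.
Lemma bigminn_le (I : finType) (F : I -> nat) (D : nat) (i0 : I) :
  (\big[minn/D]_(i : I) F i <= F i0)%N.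
Proof.
have : i0 \in index_enum I by rewrite mem_index_enum.
elim: (index_enum I) => [|j s IH] //=.
rewrite big_cons inE => /orP[/eqP <-|hs]; first exact: geq_minl.
by apply: leq_trans (geq_minr _ _) (IH hs).
Qed.

Lemma hdelta_le (V : finType) (E : {set {set V}}) (v : V) :
  (hdelta E <= hdeg E [set v])%N.
Proof. exact: bigminn_le. Qed.

Lemma hdeg_le (V : finType) (E : {set {set V}}) (v : V) :
  (hdeg E [set v] <= hDelta E)%N.
Proof. by apply: (@leq_bigmax_cond _ (fun S : {set V} => #|S| == 1%N)); rewrite cards1. Qed.

Lemma sum_bounds (R : realType) (V : finType) (k : nat) (E : {set {set V}})
   (x : V -> R) (m M : R) (v : V) :
  uniform k E -> (forall u, m <= x u <= M) -> 0 <= m ->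
  m ^+ k.-1 *+ hdeg E [set v] <= \sum_(e in E | v \in e) \prod_(u in e :\ v) x u
   <= M ^+ k.-1 *+ hdeg E [set v].
Proof.
move=> hu hx m0.
have -> : \sum_(e in E | v \in e) \prod_(u in e :\ v) x u =
   \sum_(e in [set e in E | [set v] \subset e]%SET) \prod_(u in e :\ v) x u.
  by apply: eq_bigl => e; rewrite !inE finset.sub1set.
rewrite /hdeg -!sumr_const.
have hc : forall e, e \in [set e in E | [set v] \subset e]%SET -> #|e :\ v| = k.-1.
  move=> e; rewrite inE finset.sub1set => /andP[eE ve].
  by have := hu e eE; rewrite (cardsD1 v) ve => <-.
apply/andP; split; apply: ler_sum => e he; rewrite -(hc e he) -prodr_const;
  apply: ler_prod => u _; have /andP[h1 h2] := hx u.
- by rewrite m0 h1.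
- by rewrite h2 (le_trans m0 h1).
Qed.
Lemma t1 (R : realType) (Dd aD wD s w p : R) : 0 <= Dd -> wD <= aD -> w - wD <= p -> p <= s -> -(Dd + aD) <= s - w. Proof. lra. Qed.
Lemma t2 (R : realType) (Dd aD s w q : R) : 0 <= aD -> q <= w + Dd -> s <= q -> s - w <= Dd + aD. Proof. lra. Qed.

Lemma per_graph (R : realType) (V : finType) (k' : nat) (E : {set {set V}})
    (c z A : R) (x : V -> R) (v : V) :
  0 < c -> 0 < z <= 1 -> z * (k'.+1)%:R * c ^+ k'.+1 <= A -> A < expR 1 ->
  uniform k'.+2 E -> (forall u, x u = Fmap E c z x u) -> (0 < hDelta E)%N ->
  `| x v - (lambertW ((k'.+1)%:R * c ^+ k'.+1 * z) / ((k'.+1)%:R * z))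
             `^ ((k'.+1)%:R^-1) |
   <= (1 + (k'.+1)%:R * c ^+ k'.+1) * ((k'.+1)%:R * c ^+ k'.+1) * c ^+ k'.+1
       / ((1 - A * expR (-1)) * (c * expR (- c ^+ k'.+1)) ^+ k')
       * (1 - (hdelta E)%:R / (hDelta E)%:R).
Proof.
move=> c0 /andP[z0 z1] hA Ae hu hfix D0.
set n1 := k'.+1.
set Dn := hDelta E; set d := hdelta E.
set S := fun u => \sum_(e in E | u \in e) \prod_(u' in e :\ u) x u'.
have fx u : x u = c * expR (- (z / Dn%:R) * S u) by rewrite hfix.
have xpos u : 0 < x u by rewrite fx mulr_gt0 // expR_gt0.
case: (@arg_minP _ R V v xpredT x isT) => vm _ hm.
case: (@arg_maxP _ R V v xpredT x isT) => vM _ hM.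
set m := x vm; set M := x vM.
have hmM u : m <= x u <= M by apply/andP; split; [exact: hm | exact: hM].
have m0 : 0 < m := xpos vm.
have M0 : 0 < M := xpos vM.
have Dr : 0 < Dn%:R :> R by rewrite ltr0n.
have hS u : m ^+ n1 * d%:R <= S u <= M ^+ n1 * Dn%:R.
  have /andP[h1 h2] := @sum_bounds R V k'.+2 E x m M u hu hmM (ltW m0).
  rewrite -[m ^+ _ *+ _]mulr_natr in h1; rewrite -[M ^+ _ *+ _]mulr_natr in h2.
  have e1 : d%:R <= (hdeg E [set u]%SET)%:R :> R by rewrite ler_nat; exact: hdelta_le.
  have e2 : (hdeg E [set u]%SET)%:R <= Dn%:R :> R by rewrite ler_nat; exact: hdeg_le.
  have p1 : 0 <= m ^+ n1 by rewrite exprn_ge0 // ltW.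
  have p2 : 0 <= M ^+ n1 by rewrite exprn_ge0 // ltW.
  apply/andP; split.
    by apply: le_trans h1; rewrite ler_wpM2l.
  by apply: le_trans h2 _; rewrite ler_wpM2l.
set r := d%:R / Dn%:R.
have zD : 0 <= z / Dn%:R by rewrite divr_ge0 // ltW.
have eM : M = c * expR (- (z / Dn%:R) * S vM) := fx vM.
have em : m = c * expR (- (z / Dn%:R) * S vm) := fx vm.
have hMb : M <= c * expR (- (z * r * m ^+ n1)).
  rewrite eM ler_pM2l // ler_expR mulNr lerN2.
  have -> : z * r * m ^+ n1 = (z / Dn%:R) * (m ^+ n1 * d%:R) by rewrite /r; ring.
  by rewrite ler_wpM2l // (andP (hS vM)).1.
have hmb : c * expR (- (z * M ^+ n1)) <= m.
  rewrite em ler_pM2l // ler_expR mulNr lerN2.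
  have -> : z * M ^+ n1 = (z / Dn%:R) * (M ^+ n1 * Dn%:R).
    by field; rewrite gt_eqF.
  by rewrite ler_wpM2l // (andP (hS vm)).2.
have Mc : M <= c.
  rewrite eM -[leRHS]mulr1 ler_pM2l // -[leRHS]expR0 ler_expR mulNr oppr_le0.
  rewrite mulr_ge0 // (le_trans _ (andP (hS vM)).1) // mulr_ge0 // ?exprn_ge0 ?ltW //.
set b := n1%:R * z.
set a := n1%:R * c ^+ n1 * z.
have b0 : 0 < b by rewrite mulr_gt0 // ltr0n.
have a0 : 0 < a by rewrite mulr_gt0 // mulr_gt0 ?ltr0n // exprn_gt0.
set p := b * m ^+ n1; set q := b * M ^+ n1.
have powexp (y t : R) : (y * expR t) ^+ n1 = y ^+ n1 * expR (n1%:R * t).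
  by rewrite exprMn expRM_natl.
have hq : q <= a * expR (- (r * p)).
  have hx1 : M \in Num.nneg by rewrite nnegrE ltW.
  have hx2 : c * expR (- (z * r * m ^+ n1)) \in Num.nneg.
    by rewrite nnegrE mulr_ge0 ?expR_ge0 // ltW.
  have := lerXn2r n1 hx1 hx2 hMb; rewrite powexp => h.
  have -> : a * expR (- (r * p)) = b * (c ^+ n1 * expR (n1%:R * - (z * r * m ^+ n1))).
    by rewrite /a /p /b mulrA; congr (_ * expR _); ring.
  by rewrite /q ler_wpM2l // ltW.
have hp : a * expR (- q) <= p.
  have hx1 : m \in Num.nneg by rewrite nnegrE ltW.
  have hx2 : c * expR (- (z * M ^+ n1)) \in Num.nneg.
    by rewrite nnegrE mulr_ge0 ?expR_ge0 // ltW.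
  have := lerXn2r n1 hx2 hx1 hmb; rewrite powexp => h.
  have -> : a * expR (- q) = b * (c ^+ n1 * expR (n1%:R * - (z * M ^+ n1))).
    by rewrite /a /q /b mulrA; congr (_ * expR _); ring.
  by rewrite /p ler_wpM2l // ltW.
have aA : a <= A.
  by apply: le_trans hA; rewrite le_eqVlt; apply/orP; left; apply/eqP; rewrite /a /n1; ring.
have dD : (d <= Dn)%N := leq_trans (hdelta_le E v) (hdeg_le E v).
have r01 : 0 <= r <= 1.
  rewrite divr_ge0 ?ler0n //= ler_pdivrMr // mul1r ler_nat //.
have L0 : 0 < 1 - A * expR (-1).
  have eL : expR 1 * expR (-1) = 1 :> R by rewrite expRN mulfV // gt_eqF // expR_gt0.
  rewrite subr_gt0 -[X in _ < X]eL ltr_pM2r //; exact: expR_gt0.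
have [w0 hw] := lambertW_spec a0.
set w := lambertW a.
have q0 : 0 <= q by rewrite mulr_ge0 ?exprn_ge0 ?ltW.
have [hq' hp'] := core a0 aA Ae r01 w0 hw q0 hq hp.
set Dd := (1 - r) * a ^+ 2 / (1 - A * expR (-1)) in hq' hp'.
have wa : w <= a.
  have e1 : 1 <= expR w by rewrite -[leLHS]expR0 ler_expR ltW.
  by rewrite -hw -[leLHS]mulr1 ler_wpM2l // ltW.
have hs : `| b * x v ^+ n1 - w | <= (1 + a) * Dd.
  have /andP[h1 h2] := hmM v.
  have hx1 : m \in Num.nneg by rewrite nnegrE ltW.
  have hx2 : x v \in Num.nneg by rewrite nnegrE ltW.
  have hx3 : M \in Num.nneg by rewrite nnegrE ltW.
  have e1 := lerXn2r n1 hx1 hx2 h1.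
  have e2 := lerXn2r n1 hx2 hx3 h2.
  have f1 : p <= b * x v ^+ n1 by apply: ler_wpM2l; [exact: ltW|exact: e1].
  have f2 : b * x v ^+ n1 <= q by apply: ler_wpM2l; [exact: ltW|exact: e2].
  have Dd0 : 0 <= Dd.
    have h0 : 0 <= (1 - r) * a ^+ 2.
      by rewrite mulr_ge0 ?sqr_ge0 // subr_ge0 (andP r01).2.
    by rewrite /Dd divr_ge0 // ltW.
  have wDd : w * Dd <= a * Dd by rewrite ler_wpM2r.
  rewrite -/w in hq' hp'.
  rewrite mulrDl mul1r.
  set s := b * x v ^+ n1 in f1 f2 *.
  set aD := a * Dd in wDd *; set wD := w * Dd in wDd hp'.
  have aD0 : 0 <= aD by rewrite mulr_ge0 // ltW.
  rewrite ler_norml; apply/andP; split; [exact: t1 Dd0 wDd hp' f1|exact: t2 aD0 hq' f2].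
set Y := (w / b) `^ n1%:R^-1.
have Y0 : 0 <= Y by apply: powR_ge0.
have n10 : n1%:R != 0 :> R by rewrite pnatr_eq0.
have hY : Y ^+ n1 = w / b.
  rewrite -powR_mulrn // -powRrM mulVf // powRr1 // divr_ge0 // ltW //.
set l0 := c * expR (- c ^+ n1).
have l00 : 0 < l0 by rewrite mulr_gt0 // expR_gt0.
have l0x : l0 <= x v.
  apply: le_trans (andP (hmM v)).1; apply: le_trans hmb.
  rewrite ler_pM2l // ler_expR lerN2.
  have hx1 : M \in Num.nneg by rewrite nnegrE ltW.
  have hx2 : c \in Num.nneg by rewrite nnegrE ltW.
  have := lerXn2r n1 hx1 hx2 Mc => h.
  apply: le_trans h; rewrite -[leRHS]mul1r ler_wpM2r // exprn_ge0 // ltW.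
have hr := root_bound k' (xpos v) Y0.
rewrite hY in hr.
have e3 : x v ^+ k'.+1 - w / b = (b * x v ^+ n1 - w) / b.
  by rewrite /n1; field; rewrite gt_eqF.
rewrite e3 normrM normfV (gtr0_norm b0) in hr.
set X := `|x v - Y| in hr *.
have X0 : 0 <= X by apply: normr_ge0.
have hX : X * l0 ^+ k' <= (1 + a) * Dd / b.
  have hx1 : l0 \in Num.nneg by rewrite nnegrE ltW.
  have hx2 : x v \in Num.nneg by rewrite nnegrE ltW.
  have h1 : X * l0 ^+ k' <= X * x v ^+ k' := ler_wpM2l X0 (lerXn2r k' hx1 hx2 l0x).
  have h2 : `|b * x v ^+ n1 - w| / b <= (1 + a) * Dd / b.
    by apply: ler_wpM2r hs; rewrite invr_ge0 ltW.
  exact: le_trans h1 (le_trans hr h2).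
have lk : 0 < l0 ^+ k' by rewrite exprn_gt0.
have hX2 : X <= (1 + a) * Dd / b / l0 ^+ k' by rewrite ler_pdivlMr.
apply: le_trans hX2 _.
set K0 := c ^+ n1 * (1 - r) / ((1 - A * expR (-1)) * l0 ^+ k').
have K00 : 0 <= K0.
  rewrite /K0 divr_ge0 ?mulr_ge0 ?exprn_ge0 ?subr_ge0 ?(andP r01).2 ?ltW //.
  by rewrite -subr_gt0.
have z0' : z != 0 by rewrite gt_eqF.
have L0' : 1 - A * expR (-1) != 0 by rewrite gt_eqF.
have lk' : l0 ^+ k' != 0 by rewrite gt_eqF.
have c0' : c != 0 by rewrite gt_eqF.
have e4 : (1 + a) * Dd / b / l0 ^+ k' = ((1 + a) * a) * K0.
  rewrite /K0 /Dd /a /b /n1; field.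
  by rewrite lk' L0' z0' /= addrC natr1 pnatr_eq0.
set B := n1%:R * c ^+ n1.
have e5 : (1 + B) * B * c ^+ n1 / ((1 - A * expR (-1)) * l0 ^+ k') * (1 - r) = ((1 + B) * B) * K0.
  rewrite /K0; field; by rewrite lk' L0'.
rewrite e4 e5 ler_wpM2r //.
have aB : a <= B.
  rewrite /a /B -[leRHS]mulr1 ler_wpM2l // mulr_ge0 ?ler0n ?exprn_ge0 ?ltW //.
have Bp : 0 < B by rewrite /B mulr_gt0 ?ltr0n ?exprn_gt0.
nra.
Qed.
Unset Implicit Arguments.

Theorem mainTheorem13 (R : realType) (k : nat) (c : R) (zeta : nat -> R)
    (V : nat -> finType) (E : forall n, {set {set V n}})
    (x : forall n, V n -> R) :
  (2 <= k)%N -> 0 < c ->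
  (forall n, 0 < zeta n <= 1) ->
  limn_sup (fun n => zeta n * (k.-1)%:R * c ^+ k.-1) < expR 1 ->
  (forall n, uniform k (E n)) ->
  asymp_tree_like R k E ->
  approx_regular R E ->
  (* x n is the (unique) fixed point of F^{G_n}_{c, zeta n} *)
  (forall n (v : V n), x n v = Fmap (E n) c (zeta n) (x n) v) ->
  forall eps : R, 0 < eps ->
    \forall n \near \oo, forall v : V n,
      `| x n v - (lambertW ((k.-1)%:R * c ^+ k.-1 * zeta n)
                    / ((k.-1)%:R * zeta n)) `^ ((k.-1)%:R^-1) | < eps.
Proof.
case: k => [|[|k']] // _ c0 hz hls hu _ har hfix eps eps0.
rewrite /= in hls *.
set l := limn_sup _ in hls.
set A := (l + expR 1) / 2.
have lA : l < A by rewrite /A; lra.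
have Ae : A < expR 1 by rewrite /A; lra.
have F1 : \forall n \near \oo, zeta n * (k'.+1)%:R * c ^+ k'.+1 < A.
  apply: (@limsup_lt R _ A ((k'.+1)%:R * c ^+ k'.+1)) => // n.
  have /andP[z0 z1] := hz n.
  have hB : 0 <= (k'.+1)%:R * c ^+ k'.+1 by rewrite mulr_ge0 ?ler0n ?exprn_ge0 // ltW.
  apply/andP; split; first by rewrite -mulrA mulr_ge0 // ltW.
  by rewrite -mulrA -[leRHS]mul1r ler_wpM2r.
set K := (1 + (k'.+1)%:R * c ^+ k'.+1) * ((k'.+1)%:R * c ^+ k'.+1) * c ^+ k'.+1
       / ((1 - A * expR (-1)) * (c * expR (- c ^+ k'.+1)) ^+ k').
have K0 : 0 <= K.
  have L0 : 0 < 1 - A * expR (-1).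
    have eL : expR 1 * expR (-1) = 1 :> R by rewrite expRN mulfV // gt_eqF // expR_gt0.
    rewrite subr_gt0 -[X in _ < X]eL ltr_pM2r //; exact: expR_gt0.
  have hB : 0 <= (k'.+1)%:R * c ^+ k'.+1 by rewrite mulr_ge0 ?ler0n ?exprn_ge0 // ltW.
  have num : 0 <= (1 + (k'.+1)%:R * c ^+ k'.+1) * ((k'.+1)%:R * c ^+ k'.+1) * c ^+ k'.+1.
    apply: mulr_ge0; [apply: mulr_ge0 => //; exact: addr_ge0 | exact: exprn_ge0 (ltW c0)].
  have den : 0 < (1 - A * expR (-1)) * (c * expR (- c ^+ k'.+1)) ^+ k'.
    by rewrite mulr_gt0 // exprn_gt0 // mulr_gt0 // expR_gt0.
  by rewrite /K divr_ge0 // ltW.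
have d0 : 0 < Num.min (1 / 2) (eps / (K + 1)).
  have K1 : 0 < K + 1 by lra.
  have h2 : 0 < 1 / 2 :> R by lra.
  by rewrite lt_min h2 divr_gt0.
have F2 := (cvgrPdist_lt _ _).1 har _ d0.
near=> n => v.
have hn : zeta n * (k'.+1)%:R * c ^+ k'.+1 < A by near: n; exact: F1.
have hr : `|1 - (hdelta (E n))%:R / (hDelta (E n))%:R| < Num.min (1 / 2) (eps / (K + 1)).
  by near: n; apply: F2.
rewrite lt_min in hr; case/andP: hr => hr1 hr2.
have D0 : (0 < hDelta (E n))%N.
  case: (posnP (hDelta (E n))) => [h0|//].
  rewrite h0 mulr0n invr0 mulr0 subr0 normr1 in hr1; lra.
have hpg := @per_graph R (V n) k' (E n) c (zeta n) A (x n) v c0 (hz n) (ltW hn) Ae (hu n) (hfix n) D0.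
apply: le_lt_trans hpg _; rewrite -/K.
set r := (hdelta (E n))%:R / (hDelta (E n))%:R in hr1 hr2 *.
have h1 : K * (1 - r) <= K * (eps / (K + 1)).
  have h3 : 1 - r <= eps / (K + 1) by apply: le_trans (ltW hr2); exact: ler_norm.
  nra.
apply: le_lt_trans h1 _.
have K1 : 0 < K + 1 by lra.
rewrite mulrA ltr_pdivrMr //; nra.
Unshelve. all: by end_near.
Qed.
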